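(* In the setting below, suppose the execution is nonempty, its last transition belongs to a committed block, and no pair of consecutive transitions is swappable. Then every block is committed and every block is interference-free, i.e. the transitions of each block occupy a contiguous segment $t_i,t_{i+1},\dots,t_j$ of the execution.
   Context: **Setting.** An execution is a finite sequence $t_1,\dots,t_n$ of pairwise distinct transitions, with execution order $t_i<_E t_j$ iff $i<j$. - **Blocks.** The transitions are partitioned into blocks, and $\mathsf{block}(t)$ denotes the block containing $t$. Each block is either committed or uncommitted. - **Labels.** Each transition $t$ has a label $\mathit{label}(t)\in\{\mathbf R,\mathbf N,\mathbf L\}$. Every committed block contains exactly one transition labelled $\mathbf N$, called its commit transition; transitions of that block occurring before it (in $<_E$) are labelled $\mathbf R$, and those occurring after it are labelled $\mathbf L$. Every transition of an uncommitted block is labelled $\mathbf R$. - **Commit.** For $t$ in a committed block, $\mathsf{commit}(t)$ denotes the commit transition of $\mathsf{block}(t)$. - **Order on uncommitted blocks.** $<_O$ is a fixed strict total order on the uncommitted blocks. **Swappable pairs.** Two transitions $t_A=t_i$ and $t_B=t_{i+1}$ that are consecutive in the execution are swappable iff one of the following holds: 1. $t_A$ is in an uncommitted block and $t_B$ is in a committed block; 2. both are in committed blocks and $\mathsf{commit}(t_B)<_E\mathsf{commit}(t_A)$; 3. both are in uncommitted blocks and $\mathsf{block}(t_B)<_O\mathsf{block}(t_A)$. *)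

(* Defs.v *)
From mathcomp Require Import all_boot.
Set Implicit Arguments. Unset Strict Implicit. Unset Printing Implicit Defensive.

Inductive label := LR | LN | LL.

Definition label_eqb (a b : label) : bool :=
  match a, b with LR, LR | LN, LN | LL, LL => true | _, _ => false end.

(* An execution t_1..t_n is modelled by the positions 'I_n (pairwise distinct
   transitions, execution order = order of positions).
   blk : block of each transition (blocks = values of type B),
   committed : which blocks are committed, lab : labels,
   ordO : the fixed order <_O on blocks (only used on uncommitted ones). *)
Section Exec.
Variables (n : nat) (B : Type) (blk : 'I_n -> B) (committed : B -> Prop)
          (lab : 'I_n -> label) (ordO : B -> B -> Prop).

Definition well_labelled : Prop :=
  (forall t : 'I_n, committed (blk t) ->
     exists! c : 'I_n, blk c = blk t /\ lab c = LN) /\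
  (forall t c : 'I_n, committed (blk t) -> blk c = blk t -> lab c = LN ->
     (t < c -> lab t = LR) /\ (c < t -> lab t = LL)) /\
  (forall t : 'I_n, ~ committed (blk t) -> lab t = LR).

Definition strict_total_on_uncommitted : Prop :=
  (forall b, ~ committed b -> ~ ordO b b) /\
  (forall a b c, ~ committed a -> ~ committed b -> ~ committed c ->
     ordO a b -> ordO b c -> ordO a c) /\
  (forall a b, ~ committed a -> ~ committed b -> a <> b -> ordO a b \/ ordO b a).

Definition is_commit (t c : 'I_n) : Prop :=
  committed (blk t) /\ blk c = blk t /\ lab c = LN.

Definition swappable (tA tB : 'I_n) : Prop :=
  (~ committed (blk tA) /\ committed (blk tB)) \/
  (committed (blk tA) /\ committed (blk tB) /\
     exists cA cB : 'I_n, is_commit tA cA /\ is_commit tB cB /\ cB < cA) \/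
  (~ committed (blk tA) /\ ~ committed (blk tB) /\ ordO (blk tB) (blk tA)).

Definition contiguous_block (b : B) : Prop :=
  forall i j k : 'I_n, i <= j -> j <= k -> blk i = b -> blk k = b -> blk j = b.

End Exec.

(* Main.v *)
Require Import Defs.
From mathcomp Require Import all_boot.
From Stdlib Require Import Classical.

Theorem mainTheorem7 (n : nat) (B : Type) (blk : 'I_n.+1 -> B)
    (committed : B -> Prop) (lab : 'I_n.+1 -> label) (ordO : B -> B -> Prop) :
  well_labelled blk committed lab ->
  strict_total_on_uncommitted committed ordO ->
  committed (blk ord_max) ->
  (forall (i j : 'I_n.+1), j = i.+1 :> nat ->
     ~ swappable blk committed lab ordO i j) ->
  forall t : 'I_n.+1,
    committed (blk t) /\ contiguous_block blk (blk t).
Proof.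
move=> [Hex [_ _]] _ Hlast Hns.
have Hall : forall t : 'I_n.+1, committed (blk t).
  have H : forall d (t : 'I_n.+1), t + d = n -> committed (blk t).
    elim=> [|d IH] t Ht.
      have -> : t = ord_max by apply: val_inj; rewrite /= addn0 in Ht; exact: Ht.
      exact: Hlast.
    have lt : t.+1 < n.+1.
      have h : t + d.+1 <= n by rewrite Ht.
      by rewrite ltnS (leq_trans _ h) // addnS ltnS leq_addr.
    have Hc := IH (Ordinal lt) ltac:(by rewrite /= addSn -addnS).
    apply: NNPP => Hn; apply: (Hns t (Ordinal lt) erefl); left; by split.
  move=> t; apply: (H (n - t)); rewrite subnKC //; rewrite -ltnS; exact: ltn_ord.
have Huniq : forall (t c c' : 'I_n.+1), is_commit blk committed lab t c ->
    is_commit blk committed lab t c' -> c = c'.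
  move=> t c c' [Ht [Hb Hl]] [_ [Hb' Hl']].
  have [x [_ Hx]] := Hex t Ht.
  by rewrite -(Hx c (conj Hb Hl)) -(Hx c' (conj Hb' Hl')).
have Hcom : forall t : 'I_n.+1, exists c, is_commit blk committed lab t c.
  move=> t; have [c [[Hb Hl] _]] := Hex t (Hall t); exists c; by split.
have Hmono : forall d (i j : 'I_n.+1), j = i + d :> nat -> forall ci cj,
    is_commit blk committed lab i ci -> is_commit blk committed lab j cj -> ci <= cj.
  elim=> [|d IH] i j Hij ci cj Hi Hj.
    have eij : i = j by apply: val_inj; rewrite /= Hij addn0.
    by subst j; rewrite (Huniq _ _ _ Hi Hj).
  have lt : i.+1 < n.+1 by rewrite (leq_ltn_trans _ (ltn_ord j)) // Hij addnS ltnS leq_addr.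
  have [cm Hm] := Hcom (Ordinal lt).
  have h1 : ci <= cm.
    rewrite leqNgt; apply/negP => Hlt.
    apply: (Hns i (Ordinal lt) erefl); right; left.
    split; first exact: Hall. split; first exact: Hall.
    by exists ci, cm.
  apply: leq_trans h1 _; apply: (IH (Ordinal lt) j) => //.
  by rewrite /= Hij addnS addSn.
move=> t; split; first exact: Hall.
move=> i j k Hij Hjk Hi Hk.
have [ci Hci] := Hcom i.
have Hck : is_commit blk committed lab k ci.
  case: Hci => _ [Hb Hl]; split; first exact: Hall. by rewrite Hb Hi Hk.
have [cj Hcj] := Hcom j.
have h1 : ci <= cj by apply: (Hmono (j - i) i j) => //; rewrite subnKC.
have h2 : cj <= ci by apply: (Hmono (k - j) j k) => //; rewrite subnKC.
have e : cj = ci by apply: val_inj; apply/eqP; rewrite eqn_leq h1 h2.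
case: Hcj => _ [Hb _]; case: Hci => _ [Hb' _].
by rewrite -Hb e Hb' Hi.
Qed.
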